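(* Let $S$ be a finite set of states and $I=\{1,\ldots,n\}$. The following two belief aggregation rules $f:\Delta(S)^I\to\Delta(S)$ are anonymous, single-valued, and satisfy Recursive Invariance: (1) for $|I|$ odd, the geometric median $f(\mathbf{p})=\arg\min_{p\in\Delta(S)}\sum_{i\in I}\|p_i-p\|$ (Euclidean norm); (2) the equal-wealth parimutuel price rule, where $f(\mathbf{p})$ is the equilibrium price $\rho$ of the parimutuel equilibrium with equal wealth of the market $(\mathbb{R}^S_+,p_i)_{i\in I}$.
   Context: $\Delta(S)$ is the set of probability distributions on $S$. Recursive Invariance: for all $\mathbf{p}\in\Delta(S)^I$ and $(\lambda_i)_{i\in I}\in[0,1]^I$, $f\big(((1-\lambda_i)p_i+\lambda_i f(\mathbf{p}))_{i\in I}\big)=f(\mathbf{p})$. The parimutuel market $(\mathbb{R}^S_+,p_i)_{i\in I}$ has consumers $i$ with consumption set $\mathbb{R}^S_+$ and linear utility $x\mapsto p_i\cdot x$. A parimutuel equilibrium with equal wealth is a pair $(\rho,\mathbf{x})$ with $\rho\in\Delta(S)$, $\mathbf{x}=(x_1,\ldots,x_n)\in(\mathbb{R}^S_+)^I$, such that (1) for each $i$, $\rho\cdot x_i\le 1/n$ and $p_i\cdot x_i\ge p_i\cdot y$ for all $y\in\mathbb{R}^S_+$ with $\rho\cdot y\le 1/n$; and (2) $\sum_i x_i=(1,\ldots,1)$. *)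

(* Defs.v *)
From HB Require Import structures.
From mathcomp Require Import all_boot all_order all_algebra all_fingroup.
From mathcomp Require Import reals.
Set Implicit Arguments. Unset Strict Implicit. Unset Printing Implicit Defensive.
Import Order.TTheory GRing.Theory Num.Theory.
Local Open Scope ring_scope.

Section Defs.
Variables (R : realType) (S : finType) (n : nat).

Definition is_dist (p : S -> R) : Prop :=
  (forall s, 0 <= p s) /\ \sum_(s : S) p s = 1.

Definition profile := 'I_n -> S -> R.

Definition is_profile (p : profile) : Prop := forall i, is_dist (p i).

Definition eucl_dist (p q : S -> R) : R :=
  Num.sqrt (\sum_(s : S) (p s - q s) ^+ 2).

(* A (possibly multi-valued) aggregation rule, given as a relation
   G p q  ==  "q is an output of the rule at profile p". *)
Definition rule := profile -> (S -> R) -> Prop.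

Definition single_valued (G : rule) : Prop :=
  forall p, is_profile p -> exists! q, G p q.

Definition anonymous (G : rule) : Prop :=
  forall (p : profile) q (sigma : {perm 'I_n}),
    is_profile p -> G p q -> G (fun i => p (sigma i)) q.

Definition recursive_invariance (G : rule) : Prop :=
  forall (p : profile) q (lam : 'I_n -> R),
    is_profile p -> (forall i, 0 <= lam i <= 1) -> G p q ->
    G (fun i s => (1 - lam i) * p i s + lam i * q s) q.

Definition geometric_median : rule := fun p q =>
  is_dist q /\
  forall r, is_dist r ->
    \sum_(i < n) eucl_dist (p i) q <= \sum_(i < n) eucl_dist (p i) r.

Definition parimutuel_equilibrium (p : profile) (rho : S -> R)
    (x : 'I_n -> S -> R) : Prop :=
  is_dist rho /\
  (forall i s, 0 <= x i s) /\
  (forall i, \sum_(s : S) rho s * x i s <= n%:R^-1) /\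
  (forall i (y : S -> R), (forall s, 0 <= y s) ->
      \sum_(s : S) rho s * y s <= n%:R^-1 ->
      \sum_(s : S) p i s * y s <= \sum_(s : S) p i s * x i s) /\
  (forall s, \sum_(i < n) x i s = 1).

Definition parimutuel_price : rule := fun p rho =>
  exists x, parimutuel_equilibrium p rho x.

End Defs.

(* Main.v *)
Require Import Defs.
From HB Require Import structures.
From mathcomp Require Import all_boot all_order all_algebra all_fingroup.
From mathcomp Require Import reals.
From mathcomp Require Import all_classical all_reals all_analysis.
From mathcomp Require Import ring lra.
Import Order.TTheory GRing.Theory Num.Theory.
Import numFieldTopology.Exports numFieldNormedType.Exports.
Set Implicit Arguments. Unset Strict Implicit. Unset Printing Implicit Defensive.
Local Open Scope ring_scope.
Section vec.
Variables (R : realType) (S : finType).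
Implicit Types a b v w : S -> R.

Definition dot a b := \sum_(s : S) a s * b s.
Definition nrm a := Num.sqrt (dot a a).

Lemma dotC a b : dot a b = dot b a.
Proof. by apply: eq_bigr => s _; rewrite mulrC. Qed.

Lemma dot_ext {a a' b b'} : (forall s, a s = a' s) -> (forall s, b s = b' s) ->
  dot a b = dot a' b'.
Proof. by move=> ha hb; apply: eq_bigr => s _; rewrite ha hb. Qed.

Lemma nrm_ext {a a'} : (forall s, a s = a' s) -> nrm a = nrm a'.
Proof. by move=> ha; rewrite /nrm (dot_ext ha ha). Qed.

Lemma dot_lin x y a b :
  dot (fun s => x * a s + y * b s) (fun s => x * a s + y * b s) =
  x ^+ 2 * dot a a + 2 * x * y * dot a b + y ^+ 2 * dot b b.
Proof.
rewrite /dot !mulr_sumr -!big_split /=; apply: eq_bigr => s _; ring.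
Qed.

Lemma dot_ge0 a : 0 <= dot a a.
Proof. by apply: sumr_ge0 => s _; rewrite -expr2 sqr_ge0. Qed.

Lemma dot_eq0 {a} : dot a a = 0 -> forall s, a s = 0.
Proof.
move=> /eqP; rewrite psumr_eq0 => [/allP H s|s _]; last by rewrite -expr2 sqr_ge0.
by have := H s (mem_index_enum s); rewrite /= mulf_eq0 orbb => /eqP.
Qed.

Lemma nrm_ge0 a : 0 <= nrm a. Proof. exact: sqrtr_ge0. Qed.
Lemma nrm_sq a : nrm a ^+ 2 = dot a a. Proof. by rewrite sqr_sqrtr // dot_ge0. Qed.

Lemma CS a b : dot a b ^+ 2 <= dot a a * dot b b.
Proof.
have [A0|A0] := eqVneq (dot a a) 0.
  have -> : dot a b = 0.
    by rewrite /dot big1 // => s _; rewrite (dot_eq0 A0) mul0r.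
  by rewrite A0 expr0n mul0r.
have Ap : 0 < dot a a by rewrite lt0r A0 dot_ge0.
have := dot_ge0 (fun s => dot a b * a s + (- dot a a) * b s).
rewrite dot_lin => h.
have hb := dot_ge0 b.
nra.
Qed.

Lemma CS' a b : dot a b <= nrm a * nrm b.
Proof.
have := CS a b; rewrite -!nrm_sq -exprMn => h.
have hP : 0 <= nrm a * nrm b by rewrite mulr_ge0 // nrm_ge0.
move: h hP; set P := nrm a * nrm b; set C := dot a b => h hP.
rewrite leNgt; apply/negP => hlt.
have : P ^+ 2 < C ^+ 2 by rewrite ltr_pXn2r // ?nnegrE //; apply: le_trans (ltW hlt).
by rewrite ltNge h.
Qed.

Lemma nrm_tri a b : nrm (fun s => a s + b s) <= nrm a + nrm b.
Proof.
have h := nrm_sq (fun s => a s + b s).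
rewrite (dot_ext (a' := fun s => 1 * a s + 1 * b s) (b' := fun s => 1 * a s + 1 * b s)) in h;
  try by move=> s; rewrite !mul1r.
rewrite dot_lin -!nrm_sq in h.
have := CS' a b; have := nrm_ge0 a; have := nrm_ge0 b.
have := nrm_ge0 (fun s => a s + b s); nra.
Qed.

Lemma nrm_scale c a : nrm (fun s => c * a s) = `|c| * nrm a.
Proof.
rewrite /nrm (dot_ext (a' := fun s => c * a s + 0 * a s) (b' := fun s => c * a s + 0 * a s));
  try by move=> s; rewrite mul0r addr0.
rewrite dot_lin expr0n /= !mulr0 mul0r !addr0 sqrtrM ?sqr_ge0 //.
by rewrite sqrtr_sqr.
Qed.

Lemma CS_eq a b : dot a b = nrm a * nrm b ->
  forall s, nrm b * a s = nrm a * b s.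
Proof.
move=> h s; apply/eqP; rewrite -subr_eq0; apply/eqP; move: s.
apply: dot_eq0.
rewrite (dot_ext (a' := fun s => nrm b * a s + (- nrm a) * b s) (b' := fun s => nrm b * a s + (- nrm a) * b s));
  try by move=> s; rewrite mulNr.
rewrite dot_lin h -!nrm_sq; ring.
Qed.

End vec.
Local Open Scope classical_set_scope.
Section box.
Variables (R : realType) (T : finType).
Local Notation PT := {ptws T -> R}.

Lemma box_max (g h : PT -> R) : continuous g -> continuous h ->
  forall q0 : T -> R, (forall t, 0 <= q0 t <= 1) -> h q0 = 0 ->
  exists q : T -> R, [/\ (forall t, 0 <= q t <= 1), h q = 0 &
     forall q' : T -> R, (forall t, 0 <= q' t <= 1) -> h q' = 0 -> g q' <= g q].
Proof.
move=> cg ch q0 q0b hq0.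
pose A := [set q : PT | forall t, `[(0:R), 1] (q t)] `&` (h @^-1` [set 0]).
have cA : compact A.
  apply: compact_closedI.
    exact: (@tychonoff T (fun _ => R) (fun _ => `[(0:R), 1]) (fun _ => @segment_compact R 0 1)).
  apply: preimage_closed; last exact: closed_eq.
  by move=> x _; exact: ch.
have A0 : A !=set0.
  exists q0; split => //= t; rewrite in_itv /=; exact: q0b.
have [c cA' cmax] := compact_EVT_max A0 cA (@continuous_subspaceT _ _ A g cg).
move: cA'; rewrite inE => -[cb hc].
exists c; split.
- by move=> t; have := cb t; rewrite /= in_itv.
- exact: hc.
- move=> q' q'b hq'; apply: cmax; rewrite inE; split.
  + move=> t /=; rewrite in_itv; exact: q'b.
  + exact: hq'.
Qed.

Lemma cont_proj (t : T) : continuous (fun q : PT => q t).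
Proof. exact: (@proj_continuous T (fun _ => R) t). Qed.

Definition ctn (f : PT -> R) := continuous f.

Lemma ctn_cst c : ctn (fun _ => c).
Proof. exact: cst_continuous. Qed.

Lemma ctn_proj t : ctn (fun q => q t).
Proof. exact: cont_proj. Qed.

Lemma ctn_add f g : ctn f -> ctn g -> ctn (fun q => f q + g q).
Proof. by move=> cf cg x; exact: (continuousD (cf x) (cg x)). Qed.

Lemma ctn_mul f g : ctn f -> ctn g -> ctn (fun q => f q * g q).
Proof. by move=> cf cg x; exact: (continuousM (cf x) (cg x)). Qed.

Lemma ctn_opp f : ctn f -> ctn (fun q => - f q).
Proof. by move=> cf x; exact: (continuousN (cf x)). Qed.

Lemma ctn_sqrt f : ctn f -> ctn (fun q => Num.sqrt (f q)).
Proof.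
move=> cf x; apply: (continuous_comp (cf x)).
exact: sqrt_continuous.
Qed.

Lemma ctn_sum (I : Type) (r : seq I) (P : pred I) (F : I -> PT -> R) :
  (forall i, ctn (F i)) -> ctn (fun q => \sum_(i <- r | P i) F i q).
Proof.
move=> cF; elim: r => [|a r IH].
  have -> : (fun q : PT => \sum_(i <- [::] | P i) F i q) = (fun _ => 0).
    by apply: funext => q; rewrite big_nil.
  exact: ctn_cst.
have -> : (fun q : PT => \sum_(i <- a :: r | P i) F i q) =
   (fun q => (if P a then F a q else 0) + \sum_(i <- r | P i) F i q).
  by apply: funext => q; rewrite big_cons; case: (P a); rewrite ?add0r.
apply: ctn_add => //; case: (P a) => //; exact: ctn_cst.
Qed.

Lemma ctn_prod (I : Type) (r : seq I) (P : pred I) (F : I -> PT -> R) :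
  (forall i, ctn (F i)) -> ctn (fun q => \prod_(i <- r | P i) F i q).
Proof.
move=> cF; elim: r => [|a r IH].
  have -> : (fun q : PT => \prod_(i <- [::] | P i) F i q) = (fun _ => 1).
    by apply: funext => q; rewrite big_nil.
  exact: ctn_cst.
have -> : (fun q : PT => \prod_(i <- a :: r | P i) F i q) =
   (fun q => (if P a then F a q else 1) * \prod_(i <- r | P i) F i q).
  by apply: funext => q; rewrite big_cons; case: (P a); rewrite ?mul1r.
apply: ctn_mul => //; case: (P a) => //; exact: ctn_cst.
Qed.
End box.
Local Close Scope classical_set_scope.
Section aux.
Variables (R : realType).

Lemma ler_sum_eq (I : finType) (x y : I -> R) :
  (forall i, x i <= y i) -> \sum_i y i <= \sum_i x i -> forall i, x i = y i.
Proof.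
move=> hxy hs i.
have h0 : \sum_i (y i - x i) = 0.
  apply/eqP; rewrite eq_le; apply/andP; split.
    by rewrite sumrB subr_le0.
  by apply: sumr_ge0 => j _; rewrite subr_ge0.
have := @psumr_eq0P _ _ predT (fun j => y j - x j) (fun j _ => ltac:(by rewrite subr_ge0)) h0 i isT.
by move=> /eqP; rewrite subr_eq0 => /eqP.
Qed.

Lemma sum_pm1 (n : nat) (e : 'I_n -> R) : odd n ->
  (forall i, e i = 1 \/ e i = -1) -> \sum_i e i != 0.
Proof.
move=> hn he.
have -> : \sum_i e i = \sum_i (1 - 2 * ((e i == -1) : nat)%:R).
  have h1 : (1 == -1 :> R) = false by apply/eqP => h; lra.
  apply: eq_bigr => i _; case: (he i) => ->.
    by rewrite h1 /= mulr0 subr0.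
  by rewrite eqxx /= mulr1n; lra.
rewrite sumrB sumr_const card_ord -mulr_sumr -natr_sum -natrM.
rewrite subr_eq0 eqr_nat; apply/negP => /eqP h.
by move: hn; rewrite h mul2n odd_double.
Qed.

End aux.

Section median.
Variables (R : realType) (S : finType) (n : nat).
Local Notation G := (@geometric_median R S n).

Lemma ed_nrm (a b : S -> R) : eucl_dist a b = nrm (fun s => a s - b s).
Proof. by rewrite /eucl_dist /nrm /dot; congr Num.sqrt; apply: eq_bigr => s _; rewrite expr2. Qed.

Lemma dist_box (q : S -> R) : is_dist q -> forall s, 0 <= q s <= 1.
Proof.
move=> [q0 q1] s; rewrite q0 /= -q1 (bigD1 s) //= lerDl.
by apply: sumr_ge0 => t _.
Qed.

Lemma ctn_sub (T : finType) (f g : {ptws T -> R} -> R) : ctn f -> ctn g -> ctn (fun q => f q - g q).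
Proof. by move=> cf cg; apply: ctn_add => //; apply: ctn_opp. Qed.

Lemma ctn_sq (T : finType) (f : {ptws T -> R} -> R) : ctn f -> ctn (fun q => f q ^+ 2).
Proof.
move=> cf; have -> : (fun q => f q ^+ 2) = (fun q => f q * f q).
  by apply: funext => q; rewrite expr2.
exact: ctn_mul.
Qed.

Lemma gm_exists (p : profile R S n) : is_profile p -> (0 < n)%N -> exists q, G p q.
Proof.
move=> hp n0.
have cg : ctn (fun q : {ptws S -> R} => - \sum_(i < n) eucl_dist (p i) q).
  apply: ctn_opp; apply: ctn_sum => i; rewrite /eucl_dist; apply: ctn_sqrt.
  apply: ctn_sum => s; apply: ctn_sq; apply: ctn_sub; [exact: ctn_cst|exact: ctn_proj].
have ch : ctn (fun q : {ptws S -> R} => (\sum_s q s - 1) ^+ 2).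
  apply: ctn_sq; apply: ctn_sub; [|exact: ctn_cst]; apply: ctn_sum => s; exact: ctn_proj.
have q0b := dist_box (hp (Ordinal n0)).
have hq0 : (fun q : {ptws S -> R} => (\sum_s q s - 1) ^+ 2) (p (Ordinal n0)) = 0.
  by have [_ /= ->] := hp (Ordinal n0); rewrite subrr expr0n.
have [q [qb hq qmax]] := box_max cg ch q0b hq0.
have qs : \sum_s q s = 1.
  by move: hq => /eqP; rewrite sqrf_eq0 subr_eq0 => /eqP.
exists q; split; first by split => // s; have /andP[] := qb s.
move=> r hr; rewrite -lerN2; apply: qmax; first exact: dist_box.
by have [_ ->] := hr; rewrite subrr expr0n.
Qed.

End median.
Section median2.
Variables (R : realType) (S : finType) (n : nat).
Local Notation G := (@geometric_median R S n).

Lemma gm_anon : anonymous G.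
Proof.
move=> p q sigma hp [hq hmin]; split => // r hr.
have e : forall F : 'I_n -> R, \sum_i F (sigma i) = \sum_i F i.
  by move=> F; rewrite [RHS](reindex_inj (@perm_inj _ sigma)).
rewrite (e (fun i => eucl_dist (p i) q)) (e (fun i => eucl_dist (p i) r)).
exact: hmin.
Qed.

Lemma gm_ri : recursive_invariance G.
Proof.
move=> p q lam hp hlam [hq hmin]; split => // r hr /=.
have e1 : forall i, eucl_dist (fun s => (1 - lam i) * p i s + lam i * q s) q =
    eucl_dist (p i) q - lam i * eucl_dist (p i) q.
  move=> i; rewrite !ed_nrm.
  rewrite (nrm_ext (a' := fun s => (1 - lam i) * (p i s - q s))); last by move=> s; ring.
  have /andP[l0 l1] := hlam i.
  by rewrite nrm_scale ger0_norm ?subr_ge0 //; ring.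
have e2 : forall i, eucl_dist (p i) r <=
    lam i * eucl_dist (p i) q + eucl_dist (fun s => (1 - lam i) * p i s + lam i * q s) r.
  move=> i; rewrite !ed_nrm.
  have /andP[l0 l1] := hlam i.
  rewrite (nrm_ext (a := fun s => p i s - r s)
     (a' := fun s => lam i * (p i s - q s) + ((1 - lam i) * p i s + lam i * q s - r s)));
     last by move=> s; ring.
  by apply: le_trans (nrm_tri _ _) _; rewrite nrm_scale ger0_norm.
under eq_bigr do rewrite e1.
rewrite sumrB.
have h1 := hmin r hr.
have h2 : \sum_i eucl_dist (p i) r <= \sum_i (lam i * eucl_dist (p i) q +
    eucl_dist (fun s => (1 - lam i) * p i s + lam i * q s) r).
  by apply: ler_sum => i _; exact: e2.
rewrite big_split /= in h2.
lra.
Qed.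

Lemma sum_ed (p : 'I_n -> S -> R) q : \sum_i eucl_dist (p i) q = \sum_i nrm (fun s => p i s - q s).
Proof. by apply: eq_bigr => i _; exact: ed_nrm. Qed.

Lemma norm1 (x : R) : `|x| = 1 -> x = 1 \/ x = -1.
Proof.
case: (lerP 0 x) => hx.
  by rewrite ger0_norm // => ->; left.
by rewrite ltr0_norm // => <-; right; rewrite opprK.
Qed.

Lemma gm_unique (p : profile R S n) q1 q2 : odd n -> G p q1 -> G p q2 -> q1 = q2.
Proof.
move=> hn [h1 m1] [h2 m2].
pose d := fun s => q2 s - q1 s.
suff : dot d d = 0.
  move=> /dot_eq0 hd; apply: funext => s; have := hd s; rewrite /d => /eqP.
  by rewrite subr_eq0 => /eqP ->.
case: (eqVneq (dot d d) 0) => // hd0; exfalso.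
have ndp : 0 < nrm d by rewrite sqrtr_gt0 lt0r hd0 dot_ge0.
pose a i := nrm (fun s => p i s - q1 s).
pose b i := nrm (fun s => p i s - q2 s).
have f12 : \sum_i a i = \sum_i b i.
  apply/le_anti/andP; split.
    by have := m1 q2 h2; rewrite !sum_ed.
  by have := m2 q1 h1; rewrite !sum_ed.
pose m := fun s => (q1 s + q2 s) / 2.
have hm : is_dist m.
  split.
    move=> s; have := dist_box h1 s; have := dist_box h2 s; rewrite /m => /andP[? ?] /andP[? ?].
    lra.
  rewrite /m -mulr_suml big_split /=; case: h1 => _ ->; case: h2 => _ ->; lra.
have hmid : forall i, nrm (fun s => p i s - m s) =
    nrm (fun s => (p i s - q1 s) + (p i s - q2 s)) / 2.
  move=> i; rewrite (nrm_ext (a' := fun s => 2^-1 * ((p i s - q1 s) + (p i s - q2 s)))).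
    by rewrite nrm_scale ger0_norm ?invr_ge0 // mulrC.
  by move=> s; rewrite /m; field.
have tri : forall i, nrm (fun s => p i s - m s) <= (a i + b i) / 2.
  move=> i; rewrite hmid ler_pM2r ?invr_gt0 //; exact: nrm_tri.
have sm : \sum_i (a i + b i) / 2 <= \sum_i nrm (fun s => p i s - m s).
  rewrite -mulr_suml big_split /= -f12.
  have := m1 m hm; rewrite !sum_ed.
  rewrite -/a => h; lra.
have eqi := ler_sum_eq tri sm.
have hab : forall i s, b i * (p i s - q1 s) = a i * (p i s - q2 s).
  move=> i; apply: CS_eq.
  have h := eqi i; rewrite hmid in h.
  have hs : nrm (fun s => p i s - q1 s + (p i s - q2 s)) = a i + b i by lra.
  have := nrm_sq (fun s => p i s - q1 s + (p i s - q2 s)).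
  rewrite hs (dot_ext (a' := fun s => 1 * (p i s - q1 s) + 1 * (p i s - q2 s))
                      (b' := fun s => 1 * (p i s - q1 s) + 1 * (p i s - q2 s)));
     try by move=> s; rewrite !mul1r.
  rewrite dot_lin -!nrm_sq -/(a i) -/(b i) => h'.
  lra.
have habs : forall i, `|a i - b i| = nrm d.
  move=> i.
  have a0 : 0 <= a i by exact: nrm_ge0.
  case: (eqVneq (a i) 0) => ha.
    have hu : forall s, p i s - q1 s = 0.
      apply: dot_eq0; apply/eqP; rewrite eq_le dot_ge0 andbT.
      by rewrite -sqrtr_eq0; move: ha; rewrite /a /nrm => ->.
    have -> : b i = nrm d.
      rewrite /b (nrm_ext (a' := fun s => -1 * d s)); last first.
        by move=> s; have := hu s; rewrite /d => hs; lra.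
      by rewrite nrm_scale normrN normr1 mul1r.
    by rewrite ha sub0r normrN ger0_norm // nrm_ge0.
  have apos : 0 < a i by rewrite lt0r ha.
  have hv : nrm (fun s => (a i - b i) * (p i s - q1 s)) = nrm (fun s => a i * d s).
    apply: nrm_ext => s; have := hab i s; rewrite /d => hs; lra.
  rewrite !nrm_scale -/(a i) (ger0_norm a0) in hv.
  by apply: (mulIf (lt0r_neq0 apos)); rewrite hv mulrC.
pose e i := (a i - b i) / nrm d.
have he : forall i, e i = 1 \/ e i = -1.
  move=> i; apply: norm1; rewrite /e normrM habs normfV (ger0_norm (ltW ndp)) divff //.
  exact: lt0r_neq0.
have := sum_pm1 hn he.
by rewrite /e -mulr_suml sumrB f12 subrr mul0r eqxx.
Qed.

End median2.
Section pari.
Variables (R : realType) (S : finType) (n : nat).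
Local Notation E := (@parimutuel_equilibrium R S n).

Lemma dot_ind (a : S -> R) s c : dot a (fun t => if t == s then c else 0) = a s * c.
Proof.
rewrite /dot (bigD1 s) //= eqxx big1 ?addr0 // => t /negbTE ->; exact: mulr0.
Qed.

Lemma sum_alloc (z : 'I_n -> S -> R) (r : S -> R) :
  (forall s, \sum_i z i s = 1) -> \sum_s r s = 1 -> \sum_i dot r (z i) = 1.
Proof.
move=> hz hr; rewrite /dot exchange_big /=.
by under eq_bigr => s _ do rewrite -mulr_sumr hz mulr1.
Qed.

Lemma sum_invn : (0 < n)%N -> \sum_(i < n) (n%:R^-1 : R) = 1.
Proof.
move=> n0; rewrite sumr_const card_ord -[_ *+ n]mulr_natl mulfV //.
by rewrite pnatr_eq0 -lt0n.
Qed.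

Lemma dot_bang (a r z : S -> R) c : (forall s, a s <= c * r s) -> (forall s, 0 <= z s) ->
  dot a z <= c * dot r z.
Proof.
move=> har hz; rewrite /dot mulr_sumr; apply: ler_sum => s _.
by rewrite mulrA; apply: ler_wpM2r.
Qed.

Lemma eq_budget (p : profile R S n) rho x : (0 < n)%N -> E p rho x ->
  forall i, dot rho (x i) = n%:R^-1.
Proof.
move=> n0 [[r0 r1] [x0 [hb [hopt hsum]]]].
apply: (@ler_sum_eq _ _ (fun i => dot rho (x i)) (fun _ => n%:R^-1)).
  exact: hb.
by rewrite sum_alloc // sum_invn.
Qed.

Lemma bang (p : profile R S n) rho x : is_profile p -> (0 < n)%N -> E p rho x ->
  forall i s, p i s <= n%:R * dot (p i) (x i) * rho s.
Proof.
move=> hp n0 [[r0 r1] [x0 [hb [hopt0 hsum]]]] i s.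
have hopt : forall i y, (forall s, 0 <= y s) -> dot rho y <= n%:R^-1 ->
  dot (p i) y <= dot (p i) (x i) := hopt0.
have u0 : 0 <= dot (p i) (x i).
  by apply: sumr_ge0 => t _; apply: mulr_ge0; [case: (hp i)|].
have nR : 0 < (n%:R : R) by rewrite ltr0n.
case: (eqVneq (rho s) 0) => hr.
  rewrite hr mulr0 leNgt; apply/negP => hps.
  have h : forall t, 0 <= (if t == s then (dot (p i) (x i) + 1) / p i s else 0).
    by move=> t; case: (t == s) => //; apply: divr_ge0 => //; [lra | exact: ltW].
  have h1 := hopt i _ h (ltac:(by rewrite dot_ind hr mul0r invr_ge0 ler0n)).
  rewrite dot_ind mulrC divfK ?lt0r_neq0 // in h1.
  lra.
have rp : 0 < rho s by rewrite lt0r hr r0.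
have h : forall t, 0 <= (if t == s then (n%:R * rho s)^-1 else 0 : R).
  by move=> t; case: (t == s) => //; rewrite invr_ge0 mulr_ge0 // ltW.
have h1 := hopt i _ h (ltac:(by rewrite dot_ind invfM mulrCA mulfV ?lt0r_neq0 // mulr1)).
rewrite dot_ind in h1.
rewrite ler_pdivrMr ?mulr_gt0 // in h1.
by have -> : n%:R * dot (p i) (x i) * rho s = dot (p i) (x i) * (n%:R * rho s) by ring.
Qed.

Lemma u_pos (p : profile R S n) rho x : is_profile p -> (0 < n)%N -> E p rho x ->
  forall i, 0 < dot (p i) (x i).
Proof.
move=> hp n0 he i.
have hb := bang hp n0 he i.
have [[r0 r1] _] := he.
have : \sum_s p i s <= \sum_s n%:R * dot (p i) (x i) * rho s by apply: ler_sum => s _; exact: hb.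
rewrite -mulr_sumr r1 mulr1; have [_ ->] := hp i => h.
have nR : 0 < (n%:R : R) by rewrite ltr0n.
rewrite lt0r; apply/andP; split.
  by apply/eqP => h0; move: h; rewrite h0 mulr0 ler10.
by apply: sumr_ge0 => t _; apply: mulr_ge0; [case: (hp i)| case: he => _ [x0 _]].
Qed.

End pari.
Section pari2.
Variables (R : realType) (S : finType) (n : nat).
Local Notation E := (@parimutuel_equilibrium R S n).

Lemma pm_unique (p : profile R S n) rho sig x y : is_profile p -> (0 < n)%N ->
  E p rho x -> E p sig y -> rho = sig.
Proof.
move=> hp n0 h1 h2.
pose u i := dot (p i) (x i). pose v i := dot (p i) (y i).
have b1 := bang hp n0 h1. have b2 := bang hp n0 h2.
have up := u_pos hp n0 h1. have vp := u_pos hp n0 h2.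
have e1 := eq_budget n0 h1. have e2 := eq_budget n0 h2.
have nR : 0 < (n%:R : R) by rewrite ltr0n.
have [[r0 r1] [x0 [_ [_ xs]]]] := h1.
have [[s0 s1] [y0 [_ [_ ys]]]] := h2.
have i1 : forall i, v i <= n%:R * u i * dot rho (y i).
  by move=> i; apply: dot_bang => // s; exact: b1.
have i2 : forall i, u i <= n%:R * v i * dot sig (x i).
  by move=> i; apply: dot_bang => // s; exact: b2.
have S1 : \sum_i dot rho (y i) = 1 by apply: sum_alloc.
have S2 : \sum_i dot sig (x i) = 1 by apply: sum_alloc.
have j1 : \sum_i v i / u i <= n%:R.
  have -> : (n%:R : R) = n%:R * \sum_i dot rho (y i) by rewrite S1 mulr1.
  rewrite mulr_sumr; apply: ler_sum => i _.
  by rewrite ler_pdivrMr ?up //; apply: le_trans (i1 i) _; rewrite le_eqVlt; apply/orP; left; apply/eqP; ring.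
have j2 : \sum_i u i / v i <= n%:R.
  have -> : (n%:R : R) = n%:R * \sum_i dot sig (x i) by rewrite S2 mulr1.
  rewrite mulr_sumr; apply: ler_sum => i _.
  by rewrite ler_pdivrMr ?vp //; apply: le_trans (i2 i) _; rewrite le_eqVlt; apply/orP; left; apply/eqP; ring.
have t2 : forall i, (fun _ => 2 : R) i <= v i / u i + u i / v i.
  move=> i /=; rewrite -subr_ge0.
  have -> : v i / u i + u i / v i - 2 = (u i - v i) ^+ 2 / (u i * v i).
    by field; rewrite !lt0r_neq0 ?up ?vp.
  by apply: divr_ge0; [exact: sqr_ge0 | apply: mulr_ge0; apply: ltW; [exact: up | exact: vp]].
have uv : forall i, u i = v i.
  move=> i; have := ler_sum_eq t2.
  have hs : \sum_i (v i / u i + u i / v i) <= \sum_(i < n) (2 : R).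
    rewrite big_split /= sumr_const card_ord.
    have -> : (2 : R) *+ n = n%:R + n%:R by rewrite -mulr_natl; ring.
    exact: lerD.
  move=> /(_ hs i) /= /eqP; rewrite eq_sym -subr_eq0.
  have -> : v i / u i + u i / v i - 2 = (u i - v i) ^+ 2 / (u i * v i).
    by field; rewrite !lt0r_neq0 ?up ?vp.
  have uz : u i != 0 := lt0r_neq0 (up i). have vz : v i != 0 := lt0r_neq0 (vp i).
  rewrite mulf_eq0 invr_eq0 mulf_eq0 mulf_eq0 (negbTE uz) (negbTE vz) !orbF orbb.
  by rewrite subr_eq0 => /eqP.
have ry : forall i, dot rho (y i) = n%:R^-1.
  move=> i0; apply/esym; move: i0.
  apply: (@ler_sum_eq _ _ (fun _ => n%:R^-1) (fun i => dot rho (y i))).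
    move=> i /=; have h := i1 i; rewrite -(uv i) in h.
    have h' : u i * 1 <= u i * (n%:R * dot rho (y i)).
      by rewrite mulr1 mulrA [u i * _]mulrC.
    rewrite ler_pM2l ?up // in h'.
    by rewrite -[n%:R^-1]mulr1 ler_pdivrMl.
  by rewrite S1 sum_invn.
have eqr : forall i s, p i s * y i s = n%:R * u i * rho s * y i s.
  move=> i; apply: ler_sum_eq.
    by move=> s; apply: ler_wpM2r; [exact: y0 | exact: b1].
  have -> : \sum_s n%:R * u i * rho s * y i s = n%:R * u i * dot rho (y i).
    by rewrite /dot mulr_sumr; apply: eq_bigr => s _; rewrite mulrA.
  rewrite ry mulrAC mulfV ?lt0r_neq0 // mul1r (uv i); exact: lexx.
have eqs : forall i s, p i s * y i s = n%:R * v i * sig s * y i s.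
  move=> i; apply: ler_sum_eq.
    by move=> s; apply: ler_wpM2r; [exact: y0 | exact: b2].
  have -> : \sum_s n%:R * v i * sig s * y i s = n%:R * v i * dot sig (y i).
    by rewrite /dot mulr_sumr; apply: eq_bigr => s _; rewrite mulrA.
  rewrite e2 mulrAC mulfV ?lt0r_neq0 // mul1r; exact: lexx.
apply: funext => s.
rewrite -[rho s]mulr1 -[sig s]mulr1 -(ys s) !mulr_sumr; apply: eq_bigr => i _.
have := eqr i s; rewrite eqs (uv i) -!mulrA.
by move=> /(mulfI (lt0r_neq0 nR)) /(mulfI (lt0r_neq0 (vp i))) ->.
Qed.

Lemma pm_ri : (0 < n)%N -> recursive_invariance (@parimutuel_price R S n).
Proof.
move=> n0 p rho lam hp hlam [x hx].
exists x.
have eb := eq_budget n0 hx.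
case: hx => hr [x0 [hb [hopt hs]]].
do 4 (split => //).
move=> i y y0 hy.
have /andP[l0 l1] := hlam i.
have lin : forall z : S -> R, \sum_s ((1 - lam i) * p i s + lam i * rho s) * z s =
    (1 - lam i) * dot (p i) z + lam i * dot rho z.
  move=> z; rewrite /dot.
  transitivity (\sum_s ((1 - lam i) * (p i s * z s) + lam i * (rho s * z s))).
    by apply: eq_bigr => s _; ring.
  by rewrite big_split /= -!mulr_sumr.
rewrite !lin eb.
have := hopt i y y0 hy; rewrite -/(dot (p i) y) -/(dot (p i) (x i)) => h.
have hy' : dot rho y <= n%:R^-1 := hy.
nra.
Qed.

Lemma pm_anon : anonymous (@parimutuel_price R S n).
Proof.
move=> p rho sigma hp [x [hr [x0 [hb [hopt hs]]]]].
exists (fun i => x (sigma i)).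
split => //; split; first by move=> i s; exact: x0.
split; first by move=> i; exact: hb.
split; first by move=> i y; exact: hopt.
move=> s; rewrite -(hs s).
by rewrite [RHS](reindex_inj (@perm_inj _ sigma)).
Qed.

End pari2.
Section pari3.
Variables (R : realType) (S : finType) (n : nat).
Local Notation E := (@parimutuel_equilibrium R S n).

Lemma sum_ind (I : finType) (i0 : I) (c : R) : \sum_k (if k == i0 then c else 0) = c.
Proof. by rewrite (bigD1 i0) //= eqxx big1 ?addr0 // => k /negbTE ->. Qed.

Lemma dot_ind2 (f : S -> R) s (c : R) (b : bool) :
  \sum_t f t * (if b && (t == s) then c else 0) = if b then f s * c else 0.
Proof.
case: b => /=; first exact: dot_ind.
by rewrite big1 // => t _; rewrite mulr0.
Qed.

Lemma prod2 (I : finType) (F : I -> R) i j : i != j ->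
  \prod_k F k = F i * F j * \prod_(k | (k != i) && (k != j)) F k.
Proof.
move=> hij; rewrite (bigD1 i) //= (bigD1 j) /=; first by rewrite mulrA.
by rewrite eq_sym.
Qed.

Lemma two_le_sum (I : finType) (F : I -> R) i j : i != j -> (forall k, 0 <= F k) ->
  F i + F j <= \sum_k F k.
Proof.
move=> hij h0; rewrite (bigD1 i) //= (bigD1 j) /=; last by rewrite eq_sym.
rewrite addrA lerDl; apply: sumr_ge0 => k _; exact: h0.
Qed.

Lemma pm_from_max (p : profile R S n) (x : 'I_n -> S -> R) : is_profile p -> (0 < n)%N ->
  (forall i s, 0 <= x i s) -> (forall i s, x i s <= 1) -> (forall s, \sum_i x i s = 1) ->
  (forall x' : 'I_n -> S -> R, (forall i s, 0 <= x' i s <= 1) ->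
    (forall s, \sum_i x' i s = 1) -> \prod_i dot (p i) (x' i) <= \prod_i dot (p i) (x i)) ->
  exists rho, E p rho x.
Proof.
move=> hp n0 x0 x1 xs xmax.
have nR : 0 < (n%:R : R) by rewrite ltr0n.
have p0 : forall i s, 0 <= p i s by move=> i s; case: (hp i).
have q0b : forall i s, 0 <= (n%:R^-1 : R) <= 1.
  by move=> i s; rewrite invr_ge0 ler0n invf_le1 // ler1n.
pose u i := dot (p i) (x i).
have u0 : forall i, 0 <= u i.
  by move=> i; apply: sumr_ge0 => s _; apply: mulr_ge0.
have upos : forall i, 0 < u i.
  have hP : 0 < \prod_i u i.
    apply: lt_le_trans (xmax (fun _ _ => n%:R^-1) _ _).
    - apply: prodr_gt0 => i _; rewrite /dot.
      under eq_bigr do rewrite mulrC.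
      by rewrite -mulr_sumr; have [_ ->] := hp i; rewrite mulr1 invr_gt0.
    - by move=> i s; exact: q0b.
    - by move=> s; exact: sum_invn.
  move=> i; rewrite lt0r u0 andbT; apply/eqP => h0.
  by move: hP; rewrite (bigD1 i) //= h0 mul0r ltxx.
have key : forall s i j, 0 < x j s -> p i s * u j <= p j s * u i.
  move=> s i j hx.
  case: (eqVneq i j) => [-> //|hij].
  rewrite leNgt; apply/negP => hD.
  pose D := p i s * u j - p j s * u i.
  have Dp : 0 < D by rewrite subr_gt0.
  have ab0 : 0 < p i s * p j s + 1 by rewrite ltr_pwDr // mulr_ge0.
  pose eps := Num.min (x j s) (D / (p i s * p j s + 1)).
  have ep : 0 < eps by rewrite lt_min hx divr_gt0.
  have e1 : eps <= x j s by rewrite ge_min lexx.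
  have e2 : eps * (p i s * p j s + 1) <= D by rewrite -ler_pdivlMr // ge_min lexx orbT.
  pose x' k t := x k t + (if (k == i) && (t == s) then eps else 0)
                       - (if (k == j) && (t == s) then eps else 0).
  have hji : (j == i) = false by apply/negbTE; rewrite eq_sym.
  have hx' : forall k t, 0 <= x' k t <= 1.
    move=> k t; rewrite /x'.
    have xk0 := x0 k t; have xk1 := x1 k t.
    have [-> | ki] := eqVneq k i; have [-> | ts] := eqVneq t s.
    - rewrite /= (negbTE hij) /= subr0.
      have := two_le_sum (F := fun k => x k s) hij (fun k => x0 k s); rewrite xs /=.
      move=> h; apply/andP; split; first by apply: addr_ge0 => //; exact: ltW.
      by apply: le_trans h; rewrite lerD2l.
    - by rewrite /= !andbF !subr0 addr0 x0 x1.
    - rewrite /= ?andbT ?andbF /= addr0.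
      have [-> | kj] := eqVneq k j; last by rewrite subr0 x0 x1.
      rewrite /=; apply/andP; split; first by rewrite subr_ge0.
      by apply: le_trans (x1 j s); rewrite lerBlDr lerDl ltW.
    - by rewrite /= ?andbF !subr0 addr0 x0 x1.
  have hs' : forall t, \sum_k x' k t = 1.
    move=> t; rewrite /x' sumrB big_split /= xs.
    have si : forall k0 : 'I_n, \sum_k (if (k == k0) && (t == s) then eps else 0) = if t == s then eps else 0.
      move=> k0; case: (t == s) => /=.
        by rewrite -[RHS](sum_ind k0 eps); apply: eq_bigr => k _; rewrite andbT.
      by rewrite big1 // => k _; rewrite andbF.
    by rewrite !si addrK.
  have hu' : forall k, dot (p k) (x' k) =
      u k + (if k == i then p k s * eps else 0) - (if k == j then p k s * eps else 0).
    move=> k; rewrite /dot /x'.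
    rewrite (eq_bigr (fun t => p k t * x k t + p k t * (if (k == i) && (t == s) then eps else 0)
                 - p k t * (if (k == j) && (t == s) then eps else 0))); last by move=> t _; rewrite mulrBr mulrDr.
    by rewrite sumrB big_split /= !dot_ind2.
  have hQ : \prod_(k | (k != i) && (k != j)) dot (p k) (x' k) =
            \prod_(k | (k != i) && (k != j)) u k.
    apply: eq_bigr => k /andP[ki kj].
    by rewrite hu' (negbTE ki) (negbTE kj) addr0 subr0.
  have Qp : 0 < \prod_(k | (k != i) && (k != j)) u k by apply: prodr_gt0 => k _.
  have := xmax x' hx' hs'.
  rewrite (prod2 _ hij) [X in _ <= X](prod2 _ hij) hQ !hu' !eqxx (negbTE hij) hji.
  rewrite addr0 !subr0 ler_pM2r //.
  have key2 : (u i + p i s * eps) * (u j - p j s * eps) - u i * u j =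
              eps * (D - eps * (p i s * p j s)) by rewrite /D; ring.
  have pos : 0 < eps * (D - eps * (p i s * p j s)).
    apply: mulr_gt0 => //; lra.
  move=> h; have h' : (u i + p i s * eps) * (u j - p j s * eps) <= u i * u j := h.
  lra.
pose r k s := p k s / (n%:R * u k).
have r0 : forall k s, 0 <= r k s.
  by move=> k s; apply: divr_ge0 => //; apply: mulr_ge0 => //; exact: ltW.
have keyr : forall s i j, 0 < x j s -> r i s <= r j s.
  move=> s i j hx; have h := key s i j hx.
  rewrite -subr_ge0.
  have -> : r j s - r i s = (p j s * u i - p i s * u j) / (n%:R * u i * u j).
    rewrite /r; field.
    by rewrite !lt0r_neq0 ?upos.
  apply: divr_ge0; first by rewrite subr_ge0.
  by apply: mulr_ge0; [apply: mulr_ge0|]; apply: ltW.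
pose rho s := \sum_j x j s * r j s.
have rs : forall i s, r i s = \sum_j x j s * r i s.
  by move=> i s; rewrite -mulr_suml xs mul1r.
have P1 : forall i s, r i s <= rho s.
  move=> i s; rewrite /rho (rs i s).
  apply: ler_sum => j _; have := x0 j s; rewrite le0r => /orP[/eqP->|hx].
    by rewrite !mul0r.
  by rewrite ler_pM2l // keyr.
have P2 : forall i s, x i s * rho s = x i s * r i s.
  move=> i s; have := x0 i s; rewrite le0r => /orP[/eqP->|hx]; first by rewrite !mul0r.
  congr (_ * _); apply/le_anti/andP; split; last exact: P1.
  rewrite /rho (rs i s); apply: ler_sum => j _.
  by apply: ler_wpM2l; [exact: x0 | exact: keyr].
have rho0 : forall s, 0 <= rho s.
  by move=> s; apply: sumr_ge0 => j _; apply: mulr_ge0.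
have bud : forall i, dot rho (x i) = n%:R^-1.
  move=> i; rewrite /dot.
  transitivity (\sum_s x i s * r i s); first by apply: eq_bigr => s _; rewrite mulrC P2.
  transitivity ((\sum_s p i s * x i s) / (n%:R * u i)).
    by rewrite mulr_suml; apply: eq_bigr => s _; rewrite /r; ring.
  rewrite -/(dot (p i) (x i)) -/(u i); field.
  by rewrite !lt0r_neq0 ?upos.
have rsum : \sum_s rho s = 1.
  transitivity (\sum_i dot rho (x i)); last by rewrite (eq_bigr _ (fun i _ => bud i)) sum_invn.
  rewrite /dot [RHS]exchange_big /=.
  by apply: eq_bigr => s _; rewrite -[LHS]mulr1 -(xs s) mulr_sumr.
exists rho.
split; first by split.
split; first exact: x0.
split; first by move=> i; rewrite [X in X <= _](bud i).
split; last exact: xs.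
move=> i y y0 hy.
change (dot (p i) y <= dot (p i) (x i)).
apply: le_trans (dot_bang (c := n%:R * u i) (r := rho) _ y0) _.
  move=> s; have := P1 i s; rewrite /r ler_pdivrMr ?mulr_gt0 // => h.
  by rewrite mulrC.
have hy' : dot rho y <= n%:R^-1 := hy.
have := ler_wpM2l (ltW (mulr_gt0 nR (upos i))) hy'.
have -> : n%:R * u i * n%:R^-1 = u i by field; rewrite lt0r_neq0.
by [].
Qed.

Lemma pm_exists (p : profile R S n) : is_profile p -> (0 < n)%N ->
  exists rho x, E p rho x.
Proof.
move=> hp n0.
have nR : 0 < (n%:R : R) by rewrite ltr0n.
pose T := ('I_n * S)%type.
have cg : ctn (fun q : {ptws T -> R} => \prod_(i < n) \sum_s p i s * q (i, s)).
  apply: ctn_prod => i; apply: ctn_sum => s; apply: ctn_mul; [exact: ctn_cst | exact: ctn_proj].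
have ch : ctn (fun q : {ptws T -> R} => \sum_s (\sum_(i < n) q (i, s) - 1) ^+ 2).
  apply: ctn_sum => s; apply: ctn_sq; apply: ctn_sub; last exact: ctn_cst.
  apply: ctn_sum => i; exact: ctn_proj.
have q0b : forall t : T, 0 <= (fun _ => n%:R^-1 : R) t <= 1.
  by move=> t; rewrite invr_ge0 ler0n invf_le1 // ler1n.
have hq0 : (fun q : {ptws T -> R} => \sum_s (\sum_(i < n) q (i, s) - 1) ^+ 2) (fun _ => n%:R^-1) = 0.
  by rewrite /= big1 // => s _; rewrite sum_invn // subrr expr0n.
have [q [qb hq qmax]] := box_max cg ch q0b hq0.
pose x i s := q (i, s).
have x0 : forall i s, 0 <= x i s by move=> i s; have /andP[] := qb (i, s).
have x1 : forall i s, x i s <= 1 by move=> i s; have /andP[] := qb (i, s).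
have xs : forall s, \sum_i x i s = 1.
  move=> s; have := @psumr_eq0P _ _ predT (fun s => (\sum_i q (i,s) - 1)^+2) (fun s _ => sqr_ge0 _) hq s isT.
  by move=> /eqP; rewrite sqrf_eq0 subr_eq0 => /eqP.
have xmax : forall x' : 'I_n -> S -> R, (forall i s, 0 <= x' i s <= 1) ->
    (forall s, \sum_i x' i s = 1) -> \prod_i dot (p i) (x' i) <= \prod_i dot (p i) (x i).
  move=> x' hb hs.
  apply: (qmax (fun t => x' t.1 t.2) (fun t => hb t.1 t.2)).
  by rewrite /= big1 // => s _; rewrite hs subrr expr0n.
have [rho h] := pm_from_max hp n0 x0 x1 xs xmax.
by exists rho, x.
Qed.

End pari3.
Unset Implicit Arguments.

Theorem proposition7 (R : realType) (S : finType) (n : nat) :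
  (odd n ->
     single_valued (@geometric_median R S n) /\
     anonymous (@geometric_median R S n) /\
     recursive_invariance (@geometric_median R S n)) /\
  ((0 < n)%N ->
     single_valued (@parimutuel_price R S n) /\
     anonymous (@parimutuel_price R S n) /\
     recursive_invariance (@parimutuel_price R S n)).
Proof.
split.
- move=> hn.
  have n0 : (0 < n)%N by case: n hn.
  split.
    move=> p hp; have [q hq] := gm_exists hp n0.
    exists q; split => // q' hq'; exact: gm_unique hn hq hq'.
  by split; [exact: gm_anon | exact: gm_ri].
- move=> n0; split.
    move=> p hp; have [rho [x hx]] := pm_exists hp n0.
    exists rho; split; first by exists x.
    by move=> sig [y hy]; exact: pm_unique hp n0 hx hy.
  by split; [exact: pm_anon | exact: pm_ri n0].
Qed.
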